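(* Let $m,n\ge r\ge1$, let $L:\mathbb{R}^{m\times n}\to\mathbb{R}$ be differentiable, let $\lambda>0$ and $\tau>0$, and let $\mathcal{L}_{L2}(A,B)=L(AB^\top)+\frac{\lambda}{2}\left(\|A\|_F^2+\|B\|_F^2\right)$ for $A\in\mathbb{R}^{m\times r}$, $B\in\mathbb{R}^{n\times r}$. Let $(A(t),B(t))_{t\ge0}$ be a solution of the gradient flow $\tau\dot A=-\nabla_A\mathcal{L}_{L2}(A,B)$, $\tau\dot B=-\nabla_B\mathcal{L}_{L2}(A,B)$. Then $A(t)^\top A(t)-B(t)^\top B(t)$ converges exponentially fast to $0$ as $t\to\infty$.
   Context: $\|\cdot\|_F$ is the Frobenius norm. ''Converges exponentially fast to 0'' means its norm is bounded by $Ce^{-ct}$ for some constants $C,c>0$. *)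

(* Defs.v *)
From HB Require Import structures.
From mathcomp Require Import all_boot all_order all_algebra.
From mathcomp Require Import all_classical all_reals all_analysis.
Set Implicit Arguments. Unset Strict Implicit. Unset Printing Implicit Defensive.
Import Order.TTheory GRing.Theory Num.Theory.
Import numFieldNormedType.Exports.
Local Open Scope ring_scope.

Definition frob_inner (R : realType) (p q : nat) (G H : 'M[R]_(p, q)) : R :=
  \sum_(i < p) \sum_(j < q) G i j * H i j.

Definition frob_norm (R : realType) (p q : nat) (M : 'M[R]_(p, q)) : R :=
  Num.sqrt (\sum_(i < p) \sum_(j < q) M i j ^+ 2).

Definition is_gradient (R : realType) (p q : nat) (f : 'M[R]_(p, q) -> R)
  (X G : 'M[R]_(p, q)) : Prop :=
  differentiable f X /\ forall H : 'M[R]_(p, q), 'D_H f X = frob_inner G H.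

Definition LL2 (R : realType) (m n r : nat) (L : 'M[R]_(m, n) -> R) (lambda : R)
  (A : 'M[R]_(m, r)) (B : 'M[R]_(n, r)) : R :=
  L (A *m B^T) + lambda / 2 * (frob_norm A ^+ 2 + frob_norm B ^+ 2).

(* Main.v *)
Require Import Defs.
From HB Require Import structures.
From mathcomp Require Import all_boot all_order all_algebra.
From mathcomp Require Import all_classical all_reals all_analysis.
From mathcomp Require Import ring lra.
Import Order.TTheory GRing.Theory Num.Theory.
Import numFieldNormedType.Exports.
Local Open Scope ring_scope.
Local Open Scope classical_set_scope.

Section S.
Context {R : realType}.

Lemma entry_is_derive (p q : nat) (F : R -> 'M[R]_(p,q)) t i j :
  derivable F t 1 -> is_derive t 1 (fun s => F s i j) ((derive1 F t) i j).
Proof.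
move=> dF.
have h1 := continuous_cvg _ (@coord_continuous R p q i j ('D_1 F t)) dF.
have E : ((fun M : 'M[R]_(p,q) => M i j) \o (fun h : R => h^-1 *: ((F \o shift t) (h *: 1) - F t)))
   = (fun h : R => h^-1 *: (((fun s => F s i j) \o shift t) (h *: 1) - F t i j)).
  by apply/funext => h /=; rewrite !mxE.
rewrite E in h1.
have h2 := h1 _.
apply: DeriveDef; first by apply/cvg_ex; exists (('D_1 F t) i j); exact: h2.
rewrite derive1E /derive. apply: cvg_lim; first exact: Rhausdorff. exact: h2.
Qed.

Lemma derive_dir (p q : nat) (f : 'M[R]_(p,q) -> R) X H :
  'D_H f X = 'D_1 (fun h : R => f (h *: H + X)) 0.
Proof.
rewrite /derive; set g1 := fun h => h^-1 *: _; set g2 := fun h => h^-1 *: _.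
suff -> : g1 = g2 by [].
by rewrite funeqE /g1 /g2 => h /=; rewrite addr0 scale0r add0r [_%:A]mulr1.
Qed.

Lemma quad_derive (a b c : R) :
  is_derive (0:R) 1 (fun h : R => a + h * (b + h * c)) b.
Proof.
pose p : {poly R} := a%:P + 'X * (b%:P + 'X * c%:P).
have -> : (fun h : R => a + h * (b + h * c)) = horner p.
  by apply/funext => h; rewrite /p !hornerE.
apply: is_derive_eq.
rewrite /p derivD derivC add0r derivM derivX derivD derivC add0r derivM derivX derivC.
by rewrite !hornerE.
Qed.
Lemma sum_quad (I : finType) (a b c : I -> R) h :
  \sum_i (a i + h * (2 * b i + h * c i)) =
  \sum_i a i + h * (2 * \sum_i b i + h * \sum_i c i).
Proof.
rewrite big_split /=; congr (_ + _).
by rewrite -mulr_sumr big_split /= -!mulr_sumr.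
Qed.

Lemma frob_sq (p q : nat) (M : 'M[R]_(p,q)) :
  frob_norm M ^+ 2 = \sum_i \sum_j M i j ^+ 2.
Proof.
rewrite /frob_norm sqr_sqrtr //.
by apply: sumr_ge0 => i _; apply: sumr_ge0 => j _; apply: sqr_ge0.
Qed.

Lemma frob_sq_derive (p q : nat) (X H : 'M[R]_(p,q)) k :
  is_derive (0:R) 1 (fun h : R => frob_norm (h *: H + X) ^+ 2 + k)
    (2 * frob_inner X H).
Proof.
have -> : (fun h : R => frob_norm (h *: H + X) ^+ 2 + k) =
  (fun h : R => (\sum_i \sum_j X i j ^+ 2 + k) + h * (2 * frob_inner X H
        + h * \sum_i \sum_j H i j ^+ 2)).
  apply/funext => h; rewrite frob_sq /frob_inner.
  suff -> : \sum_i \sum_j (h *: H + X) i j ^+ 2 = \sum_i \sum_j X i j ^+ 2 + h * (2 * \sum_i \sum_j (X i j * H i j) + h * \sum_i \sum_j H i j ^+ 2) by ring.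
  rewrite -sum_quad; apply: eq_bigr => i _.
  rewrite -sum_quad; apply: eq_bigr => j _.
  rewrite !mxE; ring.
exact: quad_derive.
Qed.
Lemma gradA (p q s : nat) (L : 'M[R]_(p,q) -> R) (A0 H : 'M[R]_(p,s)) (Bt : 'M[R]_(s,q)) c k :
  differentiable L (A0 *m Bt) ->
  'D_H (fun A' => L (A' *m Bt) + c * (frob_norm A' ^+ 2 + k)) A0 =
  'D_(H *m Bt) L (A0 *m Bt) + c * (2 * frob_inner A0 H).
Proof.
move=> dL; rewrite derive_dir.
have -> : (fun h : R => L ((h *: H + A0) *m Bt) + c * (frob_norm (h *: H + A0) ^+ 2 + k))
  = (fun h : R => L (h *: (H *m Bt) + A0 *m Bt)) + c \*: (fun h : R => frob_norm (h *: H + A0) ^+ 2 + k).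
  by apply/funext => h /=; rewrite mulmxDl -scalemxAl.
have d1 : derivable (fun h : R => L (h *: (H *m Bt) + A0 *m Bt)) 0 1.
  exact: ((derivable1P L _ _).1 (diff_derivable dL)).
have d2 : is_derive (0:R) 1 (fun h : R => frob_norm (h *: H + A0) ^+ 2 + k) (2 * frob_inner A0 H) by apply: frob_sq_derive.
rewrite deriveD // deriveZ //.
by rewrite derive_val -derive_dir.
Qed.

Lemma gradB (p q s : nat) (L : 'M[R]_(p,q) -> R) (A0 : 'M[R]_(p,s)) (B0 K : 'M[R]_(q,s)) c k :
  differentiable L (A0 *m B0^T) ->
  'D_K (fun B' => L (A0 *m B'^T) + c * (k + frob_norm B' ^+ 2)) B0 =
  'D_(A0 *m K^T) L (A0 *m B0^T) + c * (2 * frob_inner B0 K).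
Proof.
move=> dL; rewrite derive_dir.
have -> : (fun h : R => L (A0 *m (h *: K + B0)^T) + c * (k + frob_norm (h *: K + B0) ^+ 2))
  = (fun h : R => L (h *: (A0 *m K^T) + A0 *m B0^T)) + c \*: (fun h : R => frob_norm (h *: K + B0) ^+ 2 + k).
  by apply/funext => h /=; rewrite linearD linearZ /= mulmxDr -scalemxAr (addrC k).
have d1 : derivable (fun h : R => L (h *: (A0 *m K^T) + A0 *m B0^T)) 0 1.
  exact: ((derivable1P L _ _).1 (diff_derivable dL)).
have d2 : is_derive (0:R) 1 (fun h : R => frob_norm (h *: K + B0) ^+ 2 + k) (2 * frob_inner B0 K) by apply: frob_sq_derive.
rewrite deriveD // deriveZ //.
by rewrite derive_val -derive_dir.
Qed.
Lemma is_derive_expRc (c x : R) :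
  is_derive x 1 (fun s : R => expR (c * s)) (c * expR (c * x)).
Proof.
have hl : is_derive x (1:R) (c \*: (@id R)) (c *: (1:R)) by apply: is_deriveZ.
have dl : derivable (fun s : R => c * s) x 1 by exact: (@ex_derive _ _ _ _ _ _ _ hl).
apply: DeriveDef.
  apply/derivable1_diffP; apply: (@differentiable_comp _ _ _ _ (fun s : R => c * s) expR).
    exact/derivable1_diffP.
  exact/derivable1_diffP/(@derivable_expR R (c * x)).
rewrite -derive1E.
have := derive1_comp dl (@derivable_expR R (c * x)).
rewrite /comp => ->.
rewrite !derive1E (@derive_val _ _ _ _ _ _ _ (is_derive_expR (c * x))).
have -> : 'D_1 (fun s : R => c * s) x = c.
  by have := @derive_val _ _ _ _ _ _ _ hl; rewrite /GRing.scale /= mulr1.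
by rewrite mulrC.
Qed.

Lemma cont_sum (T : topologicalType) n (f : 'I_n -> T -> R) x :
  (forall i, {for x, continuous (f i)}) ->
  {for x, continuous (fun s => \sum_i f i s)}.
Proof.
move=> hf; rewrite -fct_sumE.
elim/big_ind: _ => //.
- exact: cst_continuous.
- by move=> u v hu hv; apply: continuousD.
Qed.

Definition colmat {p q : nat} (M : 'M[R]_(p,q)) (a b : 'I_q) : 'M[R]_(p,q) :=
  \matrix_(i, j) (if j == a then M i b else 0).

Lemma sum_delta_l (q : nat) (a : 'I_q) (f : 'I_q -> R) x :
  \sum_j (if j == a then x else 0) * f j = x * f a.
Proof.
rewrite (bigD1 a) //= eqxx big1 ?addr0 // => j /negbTE ->; by rewrite mul0r.
Qed.

Lemma sum_delta_r (q : nat) (a : 'I_q) (f : 'I_q -> R) x :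
  \sum_j f j * (if j == a then x else 0) = f a * x.
Proof.
rewrite (bigD1 a) //= eqxx big1 ?addr0 // => j /negbTE ->; by rewrite mulr0.
Qed.

Lemma frob_inner_colmat (p q : nat) (G M : 'M[R]_(p,q)) a b :
  frob_inner G (colmat M a b) = \sum_i G i a * M i b.
Proof.
rewrite /frob_inner; apply: eq_bigr => i _.
rewrite (eq_bigr (fun j => G i j * (if j == a then M i b else 0))) ?sum_delta_r //.
by move=> j _; rewrite mxE.
Qed.

Lemma frob_inner_colmatN (p q : nat) (D M : 'M[R]_(p,q)) (tau : R) a b :
  frob_inner (- (tau *: D)) (colmat M a b) = - tau * \sum_i D i a * M i b.
Proof.
rewrite frob_inner_colmat mulr_sumr; apply: eq_bigr => i _; rewrite !mxE; ring.
Qed.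

Lemma colmat_mul (p q s : nat) (A0 : 'M[R]_(p,s)) (B0 : 'M[R]_(q,s)) a b :
  colmat A0 a b *m B0^T = A0 *m (colmat B0 b a)^T.
Proof.
apply/matrixP => i j; rewrite !mxE.
rewrite (eq_bigr (fun k => (if k == a then A0 i b else 0) * B0 j k)); last first.
  by move=> k _; rewrite !mxE.
rewrite sum_delta_l.
rewrite (eq_bigr (fun k => A0 i k * (if k == b then B0 j a else 0))); last first.
  by move=> k _; rewrite !mxE.
by rewrite sum_delta_r.
Qed.
Lemma sumC (I : finType) (f g : I -> R) :
  \sum_i f i * g i = \sum_i g i * f i.
Proof. by apply: eq_bigr => i _; rewrite mulrC. Qed.
End S.

Lemma dder (R : realType) (m n r : nat)
  (L : 'M[R]_(m, n) -> R) (hL : forall X, differentiable L X)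
  (lambda tau : R) (hlambda : 0 < lambda) (htau : 0 < tau)
  (A : R -> 'M[R]_(m, r)) (B : R -> 'M[R]_(n, r))
  (hA : forall t, 0 < t -> derivable A t 1 /\
          is_gradient (fun A' => LL2 L lambda A' (B t)) (A t) (- (tau *: derive1 A t)))
  (hB : forall t, 0 < t -> derivable B t 1 /\
          is_gradient (fun B' => LL2 L lambda (A t) B') (B t) (- (tau *: derive1 B t)))
  (k l : 'I_r) (x : R) (x0 : 0 < x) :
  let d := fun s => \sum_i A s i k * A s i l - \sum_j B s j k * B s j l in
  is_derive x 1 d (- (2 * lambda / tau) * d x).
Proof.
move=> d.
have [dA gA] := hA x x0; have [dB gB] := hB x x0.
have hdA i j := @entry_is_derive R _ _ A x i j dA.
have hdB i j := @entry_is_derive R _ _ B x i j dB.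
have Hder := is_deriveB (is_derive_sum (fun i => is_deriveM (hdA i k) (hdA i l)))
   (is_derive_sum (fun j => is_deriveM (hdB j k) (hdB j l))).
have Ed : d = \sum_i ((fun s => A s i k) * (fun s => A s i l)) - \sum_j ((fun s => B s j k) * (fun s => B s j l)).
  by apply/funext => s /=; rewrite !fct_sumE.
apply: (is_derive_eq (f' := (\sum_i (A x i k * derive1 A x i l + A x i l * derive1 A x i k)
   - \sum_j (B x j k * derive1 B x j l + B x j l * derive1 B x j k)))).
  by rewrite Ed; apply: is_derive_eq Hder _.
have EA H : frob_inner (-(tau *: derive1 A x)) H = 'D_(H *m (B x)^T) L (A x *m (B x)^T) + lambda/2 * (2 * frob_inner (A x) H).
  by rewrite -(proj2 gA H); apply: gradA; apply: hL.
have EB K : frob_inner (-(tau *: derive1 B x)) K = 'D_(A x *m K^T) L (A x *m (B x)^T) + lambda/2 * (2 * frob_inner (B x) K).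
  by rewrite -(proj2 gB K); apply: gradB; apply: hL.
have e1 := EA (colmat (A x) k l); have e2 := EA (colmat (A x) l k).
have e3 := EB (colmat (B x) l k); have e4 := EB (colmat (B x) k l).
rewrite !frob_inner_colmatN !frob_inner_colmat in e1 e2.
rewrite colmat_mul in e1; rewrite colmat_mul in e2.
rewrite !frob_inner_colmatN !frob_inner_colmat in e3 e4.
rewrite /d !big_split /=.
rewrite (@sumC _ _ (fun i => A x i k) _) (@sumC _ _ (fun i => A x i l) (derive1 A x ^~ k)).
rewrite (@sumC _ _ (fun i => B x i k) _) (@sumC _ _ (fun i => B x i l) (derive1 B x ^~ k)).
rewrite (@sumC _ _ (fun i => A x i l) _) in e2; rewrite (@sumC _ _ (fun i => B x i l) _) in e3.
set P1 := 'D_(A x *m (colmat (B x) l k)^T) L (A x *m (B x)^T) in e1 e3.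
set P2 := 'D_(A x *m (colmat (B x) k l)^T) L (A x *m (B x)^T) in e2 e4.
set S1 := \sum_i derive1 A x i k * A x i l in e1 *.
set S2 := \sum_i derive1 A x i l * A x i k in e2 *.
set T1 := \sum_i derive1 B x i l * B x i k in e3 *.
set T2 := \sum_i derive1 B x i k * B x i l in e4 *.
set Sa := \sum_i A x i k * A x i l in e1 e2 *.
set Sb := \sum_i B x i k * B x i l in e3 e4 *.
have tau0 : tau != 0 by rewrite gt_eqF.
have h1 : S1 = - (P1 + lambda / 2 * (2 * Sa)) / tau by rewrite -e1; field.
have h2 : S2 = - (P2 + lambda / 2 * (2 * Sa)) / tau by rewrite -e2; field.
have h3 : T1 = - (P1 + lambda / 2 * (2 * Sb)) / tau by rewrite -e3; field.
have h4 : T2 = - (P2 + lambda / 2 * (2 * Sb)) / tau by rewrite -e4; field.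
by rewrite h1 h2 h3 h4; field.
Qed.


Lemma ode_sol (R : realType) (d : R -> R) (c : R)
  (hc : {within `[0, +oo[, continuous d})
  (hd : forall x : R, 0 < x -> is_derive x 1 d (- c * d x)) :
  forall t, 0 <= t -> d t = expR (- (c * t)) * d 0.
Proof.
pose e := (fun s : R => expR (c * s)) \* d.
have eder : forall x : R, 0 < x -> is_derive x 1 e 0.
  move=> x x0.
  have := is_deriveM (is_derive_expRc c x) (hd x x0).
  move=> H; apply: is_derive_eq H _.
  rewrite /GRing.scale /=; ring.
have econt : {within `[0, +oo[, continuous e}.
  move=> s; apply: continuousM; last exact: hc.
  apply: continuous_subspaceT => y.
  exact/differentiable_continuous/derivable1_diffP/(@ex_derive _ _ _ _ _ _ _ (is_derive_expRc c y)).
move=> t; rewrite le_eqVlt => /predU1P[<-|t0].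
  by rewrite mulr0 oppr0 expR0 mul1r.
have := @MVT R e (fun=> 0) 0 t t0.
case.
- move=> z; rewrite in_itv /= => /andP[z0 _]; exact: eder.
- apply: (continuous_subspaceW _ econt).
  move=> z /=; rewrite !in_itv /= => /andP[z0 _]; by rewrite z0.
move=> z _; rewrite mul0r => /eqP; rewrite subr_eq0 /e /= mulr0 expR0 mul1r => /eqP <-.
by rewrite mulrA -expRD addNr expR0 mul1r.
Qed.

Theorem lemma2 (R : realType) (m n r : nat)
  (hrm : (r <= m)%N) (hrn : (r <= n)%N) (hr : (1 <= r)%N)
  (L : 'M[R]_(m, n) -> R) (hL : forall X, differentiable L X)
  (lambda tau : R) (hlambda : 0 < lambda) (htau : 0 < tau)
  (A : R -> 'M[R]_(m, r)) (B : R -> 'M[R]_(n, r))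
  (hAc : {within `[0, +oo[, continuous A})
  (hBc : {within `[0, +oo[, continuous B})
  (hA : forall t, 0 < t -> derivable A t 1 /\
          is_gradient (fun A' => LL2 L lambda A' (B t)) (A t) (- (tau *: derive1 A t)))
  (hB : forall t, 0 < t -> derivable B t 1 /\
          is_gradient (fun B' => LL2 L lambda (A t) B') (B t) (- (tau *: derive1 B t))) :
  exists C c : R, 0 < C /\ 0 < c /\
    forall t, 0 <= t ->
      frob_norm ((A t)^T *m A t - (B t)^T *m B t) <= C * expR (- (c * t)).
Proof.
set c := 2 * lambda / tau.
have cpos : 0 < c by apply: divr_gt0 => //; apply: mulr_gt0.
pose D s := (A s)^T *m A s - (B s)^T *m B s.
have Dexp : forall t, 0 <= t -> forall k l, D t k l = expR (- (c * t)) * D 0 k l.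
  move=> t t0 k l.
  pose d := fun s => \sum_i A s i k * A s i l - \sum_j B s j k * B s j l.
  have dE s : D s k l = d s.
    rewrite /D /d !mxE; congr (_ - _); apply: eq_bigr => i _; rewrite !mxE //.
  rewrite !dE; apply: (@ode_sol R d c _ _ t t0).
    move=> s; rewrite /d.
    apply: continuousB; apply: cont_sum => i; apply: continuousM.
    - exact: (continuous_cvg _ (@coord_continuous R m r i k (A s)) (hAc s)).
    - exact: (continuous_cvg _ (@coord_continuous R m r i l (A s)) (hAc s)).
    - exact: (continuous_cvg _ (@coord_continuous R n r i k (B s)) (hBc s)).
    - exact: (continuous_cvg _ (@coord_continuous R n r i l (B s)) (hBc s)).
  move=> x x0; exact: (@dder R m n r L hL lambda tau hlambda htau A B hA hB k l x x0).
exists (frob_norm (D 0) + 1), c; split; last split => //.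
  by apply: ltr_wpDl; [exact: sqrtr_ge0 | exact: ltr01].
move=> t t0; rewrite -/(D t).
have -> : frob_norm (D t) = expR (- (c * t)) * frob_norm (D 0).
  rewrite /frob_norm.
  rewrite (eq_bigr (fun i => expR (- (c*t)) ^+ 2 * \sum_j D 0 i j ^+ 2)); last first.
    by move=> i _; rewrite mulr_sumr; apply: eq_bigr => j _; rewrite (Dexp t t0) exprMn.
  rewrite -mulr_sumr sqrtrM ?sqr_ge0 // sqrtr_sqr ger0_norm // ltW // expR_gt0.
have := expR_gt0 (- (c * t)); have := sqrtr_ge0 (\sum_i \sum_j D 0 i j ^+ 2).
rewrite -/(frob_norm (D 0)); nra.
Qed.
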